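(* For every integer $n>16$, the generalized Petersen graph $GP(n,3)$ is not $\ell$-distance-balanced for any integer $\ell$ with $1\le \ell<{\rm diam}(GP(n,3))$. Moreover, $16$ is the smallest integer with this property, i.e., $16$ is the smallest integer $N$ such that for every $n>N$ the graph $GP(n,3)$ is not $\ell$-distance-balanced for any $1\le \ell<{\rm diam}(GP(n,3))$.
   Context: For a connected graph $G$ and $x,y\in V(G)$, $d_G(x,y)$ denotes the distance and ${\rm diam}(G)$ the diameter. Let $W_{xy}=\{w\in V(G): d_G(w,x)<d_G(w,y)\}$. For an integer $\ell$ with $1\le \ell\le {\rm diam}(G)$, $G$ is called $\ell$-distance-balanced if $|W_{xy}|=|W_{yx}|$ for every pair $x,y\in V(G)$ with $d_G(x,y)=\ell$. For integers $n\ge 3$ and $1\le k<n/2$, the generalized Petersen graph $GP(n,k)$ has vertex set $\{u_i: i\in\mathbb{Z}_n\}\cup\{v_i: i\in\mathbb{Z}_n\}$ and edge set $\{u_iu_{i+1}: i\in\mathbb{Z}_n\}\cup\{v_iv_{i+k}: i\in\mathbb{Z}_n\}\cup\{u_iv_i: i\in\mathbb{Z}_n\}$. *)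

(* Defs.v *)
From mathcomp Require Import all_boot.
Set Implicit Arguments. Unset Strict Implicit. Unset Printing Implicit Defensive.

Section Graphs.
Variables (T : finType) (e : rel T).

Definition walk_of_len (x y : T) (d : nat) : bool :=
  [exists p : d.-tuple T, path e x p && (last x p == y)].

(* graph distance: the least d with a walk of length d from x to y
   (shortest walks are paths, of length < #|T|); equals #|T| if y is
   unreachable from x, which never happens in a connected graph *)
Definition gdist (x y : T) : nat :=
  find (walk_of_len x y) (iota 0 #|T|).

Definition diam : nat := \max_(x : T) \max_(y : T) gdist x y.

Definition Wset (x y : T) : {set T} := [set w | gdist w x < gdist w y].

Definition l_distance_balanced (l : nat) : Prop :=
  forall x y : T, gdist x y = l -> #|Wset x y| = #|Wset y x|.

End Graphs.

(* vertices of GP(n,k): (false, i) = u_i, (true, i) = v_i *)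
Definition GPvert (n : nat) : finType := (bool * 'I_n)%type.

Definition GP (n k : nat) : rel (GPvert n) :=
  fun a b =>
    match a, b with
    | (false, i), (false, j) => (j == (i + 1) %% n :> nat) || (i == (j + 1) %% n :> nat)
    | (true, i), (true, j) => (j == (i + k) %% n :> nat) || (i == (j + k) %% n :> nat)
    | (false, i), (true, j) => i == j
    | (true, i), (false, j) => i == j
    end.
Arguments GP : clear implicits.

(* Main.v *)
Require Import Defs.
From mathcomp Require Import all_boot zify.
Set Warnings "-notation-overridden".
Set Implicit Arguments. Unset Strict Implicit. Unset Printing Implicit Defensive.


Ltac gen_sub := repeat match goal with
  | |- context [?a - ?b] =>
      lazymatch a with context [_ - _] => fail | _ => idtac end;
      lazymatch b with context [_ - _] => fail | _ => idtac end;
      let k := fresh "k" in let hk := fresh "hk" in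
      have [k [-> hk]] : exists k, a - b = k /\ k + b = a by exists (a - b); split => //; lia
  end.

Lemma minn_l a b : a <= b -> minn a b = a. Proof. by move/minn_idPl. Qed.
Lemma minn_r a b : b < a -> minn a b = b. Proof. move=> h; apply/minn_idPr; exact: ltnW. Qed.

Ltac split_min := repeat match goal with
  | |- context [minn ?a ?b] =>
      let h := fresh "hm" in case: (leqP a b) => h; [rewrite (minn_l h) | rewrite (minn_r h)]
  end.

Ltac slia := gen_sub; split_min; lia.

Section BFS.
Variables (T : finType) (e : rel T) (x : T) (g : T -> nat).
Hypothesis g0 : g x = 0.
Hypothesis g1 : forall y z, e y z -> g z <= (g y).+1.
Hypothesis g2 : forall y, y != x -> exists z, e z y /\ (g z).+1 = g y.
Hypothesis g3 : forall y, g y < #|T|.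

Lemma path_lb p z : path e z p -> g (last z p) <= g z + size p.
Proof.
elim: p z => [|a p IH] z /=; first by rewrite addn0.
case/andP => ez pp; have := IH a pp; have := g1 ez; lia.
Qed.

Lemma walk_lb y d : walk_of_len e x y d -> g y <= d.
Proof.
move/existsP=> [p /andP[pp /eqP <-]]; have := path_lb pp.
by rewrite g0 size_tuple.
Qed.

Lemma walk_ub k : forall y, g y = k -> walk_of_len e x y k.
Proof.
elim: k => [|k IH] y gy.
  have yx : y = x.
    apply/eqP; apply/negPn/negP => /g2 [z [_ ]]; by rewrite gy.
  subst y; apply/existsP; exists [tuple]; by rewrite /= eqxx.
have yx : y != x by apply/eqP => yx; subst y; rewrite g0 in gy.
case: (g2 yx) => z [ezy gz].
have /existsP [p /andP [pp /eqP lp]] : walk_of_len e x z k.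
  by apply: IH; rewrite gy in gz; case: gz.
apply/existsP.
have sz : size (rcons p y) == k.+1 by rewrite size_rcons size_tuple.
exists (Tuple sz).
by rewrite /= rcons_path pp lp ezy last_rcons eqxx.
Qed.

Lemma gdist_bfs y : gdist e x y = g y.
Proof.
rewrite /gdist.
have Hk := g3 y.
rewrite -(subnKC (ltnW Hk)) iotaD find_cat.
have -> : has (walk_of_len e x y) (iota 0 (g y)) = false.
  apply/hasP => [[d]]; rewrite mem_iota add0n => /andP [_ dl] /walk_lb.
  by rewrite leqNgt dl.
rewrite size_iota add0n.
have -> : #|T| - g y = (#|T| - g y).-1.+1 by rewrite prednK // subn_gt0.
by rewrite /= walk_ub // addn0.
Qed.
End BFS.
Definition F (a b : bool) (r : nat) : nat :=
  match a, b with
  | false, false => minn r (r %/ 3 + r %% 3 + 2)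
  | true, true => r %/ 3 + r %% 3 + 2 * minn (r %% 3) 1
  | _, _ => r %/ 3 + r %% 3 + 1
  end.
Definition H (a b : bool) (n r : nat) := minn (F a b r) (F a b (n - r)).

Ltac ifs := repeat match goal with |- context [if ?c then _ else _] => case: ifP => ? end.

Lemma modn_if a n : a < n.*2 -> a %% n = if a < n then a else a - n.
Proof.
move=> h; case: ifP => h2; first by rewrite modn_small.
have -> : a = (a - n) + n by rewrite subnK // leqNgt h2.
by rewrite modnDr modn_small ?addnK //; lia.
Qed.

Lemma lipU a n r : 16 <= n -> r < n ->
  H a false n ((r + 1) %% n) <= (H a false n r).+1 /\
  H a false n r <= (H a false n ((r + 1) %% n)).+1.
Proof. move=> ? ?; rewrite modn_if; last lia. ifs; case: a; rewrite /H /F; split; slia. Qed.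

Lemma lipV a n r : 16 <= n -> r < n ->
  H a true n ((r + 3) %% n) <= (H a true n r).+1 /\
  H a true n r <= (H a true n ((r + 3) %% n)).+1.
Proof. move=> ? ?; rewrite modn_if; last lia. ifs; case: a; rewrite /H /F; split; slia. Qed.

Lemma lipS a n r : 16 <= n -> r < n ->
  H a true n r <= (H a false n r).+1 /\ H a false n r <= (H a true n r).+1.
Proof. move=> ? ?; case: a; rewrite /H /F; split; slia. Qed.

Lemma predU a n r : 16 <= n -> r < n -> (a = false -> 0 < r) ->
  (H a false n ((r + 1) %% n)).+1 = H a false n r \/
  (H a false n ((r + (n - 1)) %% n)).+1 = H a false n r \/
  (H a true n r).+1 = H a false n r.
Proof.
move=> ? ? h0; rewrite !modn_if; try lia.
case: a h0 => h0.
- case: (leqP (F true false r) (F true false (n-r))) => hs.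
    case: (boolP (r %% 3 == 0)) => hc.
      by right; right; move: hc hs; rewrite /H /F; ifs; slia.
    by right; left; move: hc hs; rewrite /H /F; ifs; slia.
  case: (boolP ((n - r) %% 3 == 0)) => hc.
    by right; right; move: hc hs; rewrite /H /F; ifs; slia.
  by left; move: hc hs; rewrite /H /F; ifs; slia.
- have := h0 erefl => {}h0.
  case: (leqP (F false false r) (F false false (n-r))) => hs.
    case: (boolP ((2 < r) && (r %% 3 == 0))) => hc.
      by right; right; move: hc hs; rewrite /H /F; ifs; slia.
    by right; left; move: hc hs; rewrite /H /F; ifs; slia.
  case: (boolP ((2 < n - r) && ((n - r) %% 3 == 0))) => hc.
    by right; right; move: hc hs; rewrite /H /F; ifs; slia.
  by left; move: hc hs; rewrite /H /F; ifs; slia.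
Qed.

Lemma predV a n r : 16 <= n -> r < n -> (a = true -> 0 < r) ->
  (H a true n ((r + 3) %% n)).+1 = H a true n r \/
  (H a true n ((r + (n - 3)) %% n)).+1 = H a true n r \/
  (H a false n r).+1 = H a true n r.
Proof.
move=> ? ? h0; rewrite !modn_if; try lia.
case: a h0 => h0.
- have := h0 erefl => {}h0.
  case: (leqP (F true true r) (F true true (n-r))) => hs.
    case: (boolP (r %% 3 == 0)) => hc.
      by right; left; move: hc hs; rewrite /H /F; ifs; slia.
    by right; right; move: hc hs; rewrite /H /F; ifs; slia.
  case: (boolP ((n - r) %% 3 == 0)) => hc.
    by left; move: hc hs; rewrite /H /F; ifs; slia.
  by right; right; move: hc hs; rewrite /H /F; ifs; slia.
- case: (leqP (F false true r) (F false true (n-r))) => hs.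
    case: (boolP (r < 3)) => hc.
      by right; right; move: hc hs; rewrite /H /F; ifs; slia.
    by right; left; move: hc hs; rewrite /H /F; ifs; slia.
  case: (boolP (n - r < 3)) => hc.
    by right; right; move: hc hs; rewrite /H /F; ifs; slia.
  by left; move: hc hs; rewrite /H /F; ifs; slia.
Qed.

Definition off n (i j : nat) := (j + n - i) %% n.
Definition dist n (w1 w2 : GPvert n) : nat := H w1.1 w2.1 n (off n w1.2 w2.2).

Lemma off_shift n i j d : i < n -> off n i ((j + d) %% n) = (off n i j + d) %% n.
Proof.
move=> hi; rewrite /off -!addnBA ?(ltnW hi) //.
by rewrite modnDml modnDml addnAC.
Qed.

Lemma off0 n i j : i < n -> j < n -> (off n i j == 0) = (j == i).
Proof.
move=> hi hj; rewrite /off modn_if; last lia.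
case: ifP => h; apply/eqP/eqP; lia.
Qed.

Lemma modn_back n j d : 0 < d <= n -> j < n -> ((j + (n - d)) %% n + d) %% n = j.
Proof.
move=> hd hj; rewrite modnDml -addnA subnK ?modnDr ?modn_small //; lia.
Qed.

Lemma off_lt n i j : 0 < n -> off n i j < n.
Proof. by move=> h; rewrite /off ltn_mod. Qed.

Lemma gdist_GP n (x y : GPvert n) : 16 <= n -> gdist (GP n 3) x y = dist x y.
Proof.
move=> hn; have n0 : 0 < n by lia.
case: x => a i0.
apply: gdist_bfs => [| [b j] [c k] | [b j] | [b j]].
- by rewrite /dist /off /= addKn modnn /H; case: a; rewrite /F; slia.
- rewrite /dist /=; have hr := off_lt i0 j n0.
  have hr' := off_lt i0 k n0.
  case: b; case: c => /= E.
  + case/orP: E => /eqP ->.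
      by rewrite off_shift //; have [? ?] := lipV a hn hr.
    by rewrite off_shift //; have [? ?] := lipV a hn hr'.
  + move/eqP: E => <-; by have [? ?] := lipS a hn hr.
  + move/eqP: E => <-; by have [? ?] := lipS a hn hr.
  + case/orP: E => /eqP ->.
      by rewrite off_shift //; have [? ?] := lipU a hn hr.
    by rewrite off_shift //; have [? ?] := lipU a hn hr'.
- move=> hy; have hr := off_lt i0 j n0.
  have h0 : b = a -> 0 < off n i0 j.
    move=> ba; subst b; rewrite lt0n off0 //; apply: contra hy => /eqP e.
    by apply/eqP; congr pair; apply: val_inj.
  have hj : j < n by [].
  case: b hy h0 => hy h0.
  + case: (predV hn hr (fun e : a = true => h0 (esym e))) => [E|[E|E]].
    * exists (true, Ordinal (ltn_pmod (j + 3) n0)); split; first by rewrite /= eqxx orbT.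
      by rewrite /dist /= off_shift.
    * exists (true, Ordinal (ltn_pmod (j + (n - 3)) n0)); split.
        by rewrite /= modn_back ?eqxx //; lia.
      by rewrite /dist /= off_shift.
    * by exists (false, j); rewrite /= eqxx.
  + case: (predU hn hr (fun e : a = false => h0 (esym e))) => [E|[E|E]].
    * exists (false, Ordinal (ltn_pmod (j + 1) n0)); split; first by rewrite /= eqxx orbT.
      by rewrite /dist /= off_shift.
    * exists (false, Ordinal (ltn_pmod (j + (n - 1)) n0)); split.
        by rewrite /= modn_back ?eqxx //; lia.
      by rewrite /dist /= off_shift.
    * by exists (true, j); rewrite /= eqxx.
- rewrite card_prod card_bool card_ord /dist /H /F /=.
  have := off_lt i0 j n0.
  case: a; case: b; slia.
Qed.


Definition Dn n := if n %% 6 == 5 then (n-5) %/ 6 + 3 else (n-4) %/ 6 + 4.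

Lemma H_le_Dn a b n r : 16 <= n -> r < n -> H a b n r <= Dn n.
Proof. move=> ? ?; rewrite /Dn; case: ifP => ?; case: a; case: b; rewrite /H /F; slia. Qed.

Lemma diam_le n : 16 <= n -> diam (GP n 3) <= Dn n.
Proof.
move=> hn; rewrite /diam.
apply/bigmax_leqP => x _; apply/bigmax_leqP => y _.
rewrite gdist_GP // /dist.
have := H_le_Dn x.1 y.1 hn (off_lt x.2 y.2 (_ : 0 < n)).
apply; lia.
Qed.

Lemma H_sym n a b i : i < n -> H a b n ((n - i) %% n) = H a b n i.
Proof.
move=> hi; case: i hi => [|i] hi; first by rewrite subn0 modnn /H subn0 minnC.
rewrite modn_small; last lia.
rewrite /H subKn; [exact: minnC | lia].
Qed.

Lemma offK n i m : i < n -> m < n -> off n (off n i m) m = i.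
Proof.
move=> hi hm; rewrite /off (modn_if (a := m + n - i)); last lia.
case: ifP => h; rewrite modn_if; try lia; case: ifP => h2; lia.
Qed.

Definition Af n m i := H false true n ((m + n - i) %% n).
Definition Bf n i := H false false n i.
Definition Cf n i := H true true n i.

Lemma card_cmp n m (cmp : nat -> nat -> bool) (n0 : 0 < n) (hm : m < n) : 16 <= n ->
  #|[set w : GPvert n | cmp (gdist (GP n 3) w (false, Ordinal n0)) (gdist (GP n 3) w (true, Ordinal hm))]|
  = \sum_(i < n) (cmp (Bf n i) (Af n m i) + cmp (Af n m i) (Cf n i)).
Proof.
move=> hn.
rewrite -sum1dep_card big_mkcond /=.
transitivity (\sum_(b : bool) \sum_(i : 'I_n)
   (if cmp (gdist (GP n 3) (b, i) (false, Ordinal n0)) (gdist (GP n 3) (b, i) (true, Ordinal hm))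
    then 1 else 0)).
  by rewrite pair_bigA; apply: eq_bigr => [[b i]].
rewrite big_bool /= addnC big_split /=.
congr (_ + _).
  by apply: eq_bigr => i _; rewrite !gdist_GP // /dist /= /off add0n H_sym //.
pose sg (i : 'I_n) : 'I_n := Ordinal (off_lt i m n0).
have sgK : involutive sg by move=> i; apply: val_inj; rewrite /= offK.
rewrite (reindex_inj (inv_inj sgK)) /=.
apply: eq_bigr => i _; rewrite !gdist_GP // /dist /= offK //.
rewrite /off add0n H_sym; last by apply: ltn_pmod.
by [].
Qed.

Definition Lf n m i := (Bf n i < Af n m i) + (Af n m i < Cf n i).
Definition Rf n m i := (Af n m i < Bf n i) + (Cf n i < Af n m i).

Lemma not_bal n m : 16 <= n -> m < n ->
  \sum_(0 <= i < n) Lf n m i != \sum_(0 <= i < n) Rf n m i ->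
  ~ l_distance_balanced (GP n 3) (H false true n m).
Proof.
move=> hn hm hne hb; have n0 : 0 < n by lia.
have := hb (false, Ordinal n0) (true, Ordinal hm).
rewrite gdist_GP // /dist /off /= subn0 modnDr modn_small // => /(_ erefl).
rewrite /Wset (card_cmp (fun p q => p < q)) //.
rewrite (card_cmp (fun p q => q < p)) //.
move=> e; have e' : \sum_(i < n) Lf n m i = \sum_(i < n) Rf n m i := e.
by move: hne; rewrite !big_mkord e' eqxx.
Qed.

Lemma Aif n m i : i < n -> m < n ->
  Af n m i = H false true n (if i <= m then m - i else m + n - i).
Proof.
move=> hi hm; rewrite /Af modn_if; last lia.
case: ifP => h1; case: ifP => h2; congr (H _ _ _ _); lia.
Qed.

Lemma ptw_le a b c : ~ (b <= a <= c /\ b < c) -> (b < a) + (a < c) <= (a < b) + (c < a).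
Proof.
move=> h; case: (ltngtP b a) => h1; case: (ltngtP a c) => h2 /=; try lia;
  exfalso; apply: h; lia.
Qed.

Lemma ptw_lt a b c : c <= a <= b /\ c < b -> (b < a) + (a < c) < (a < b) + (c < a).
Proof.
move=> h; case: (ltngtP b a) => h1; case: (ltngtP a c) => h2 /=; lia.
Qed.

Lemma sum_patch n (f g : nat -> nat) (S : seq nat) : uniq S -> all (fun i => i < n) S ->
  (forall i, i < n -> i \notin S -> f i <= g i) ->
  \sum_(i <- S) f i < \sum_(i <- S) g i ->
  \sum_(0 <= i < n) f i < \sum_(0 <= i < n) g i.
Proof.
move=> uS aS hp hS.
have eS : forall h : nat -> nat, \sum_(0 <= i < n | i \in S) h i = \sum_(i <- S) h i.
  move=> h; rewrite -big_filter; apply: perm_big.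
  apply: uniq_perm => //; first by rewrite filter_uniq // iota_uniq.
  move=> i; rewrite mem_filter mem_iota.
  case iS: (i \in S) => //=.
  rewrite add0n subn0; exact: (allP aS i iS).
rewrite (bigID (fun i => i \in S) _ f) (bigID (fun i => i \in S) _ g) /= !eS.
rewrite -addSn; apply: leq_add => //.
rewrite big_nat_cond [X in _ <= X]big_nat_cond.
apply: leq_sum => i /andP [/andP [_ hi] hn]; exact: hp.
Qed.

Lemma fam n m (S : seq nat) : 16 <= n -> m < n -> uniq S -> all (fun i => i < n) S ->
  (forall i, i < n -> i \notin S -> ~ (Bf n i <= Af n m i <= Cf n i /\ Bf n i < Cf n i)) ->
  \sum_(i <- S) Lf n m i < \sum_(i <- S) Rf n m i ->
  ~ l_distance_balanced (GP n 3) (H false true n m).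
Proof.
move=> hn hm uS aS hp hS; apply: not_bal => //.
rewrite neq_ltn (sum_patch uS aS) //.
move=> i hi hni; exact: ptw_le (hp i hi hni).
Qed.

Lemma LRval n m i a b c : i < n -> m < n ->
  H false true n (if i <= m then m - i else m + n - i) = a -> Bf n i = b -> Cf n i = c ->
  Lf n m i = (b < a) + (a < c) /\ Rf n m i = (a < b) + (c < a).
Proof. by move=> hi hm ea eb ec; rewrite /Lf /Rf Aif // ea eb ec. Qed.

Lemma sum_nat_sumn n (f : nat -> nat) : \sum_(0 <= i < n) f i = sumn (map f (iota 0 n)).
Proof. by rewrite sumnE big_map /index_iota subn0. Qed.

Definition smallok n :=
  all (fun l => has (fun m => (H false true n m == l) &&
     (sumn (map (Lf n m) (iota 0 n)) != sumn (map (Rf n m) (iota 0 n)))) (iota 0 n))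
   (iota 1 (Dn n).-1).

Lemma smallok_ok n l : 16 <= n -> smallok n -> 1 <= l < Dn n ->
  ~ l_distance_balanced (GP n 3) l.
Proof.
move=> hn /allP /(_ l) h hl.
have /h /hasP [m] : l \in iota 1 (Dn n).-1 by rewrite mem_iota; lia.
rewrite mem_iota add0n => /andP [_ hm] /andP [/eqP <- hne].
by apply: not_bal => //; rewrite !sum_nat_sumn.
Qed.

Lemma small17_25 n l : 17 <= n <= 25 -> 1 <= l < Dn n -> ~ l_distance_balanced (GP n 3) l.
Proof.
move=> /andP [h1 h2]; apply: smallok_ok; first lia.
have : n \in iota 17 9 by rewrite mem_iota; lia.
move: n {h1 h2}; apply/allP; by vm_compute.
Qed.

Lemma Dn_bound n l : 16 <= n -> l < Dn n -> 6 * l <= n + 14.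
Proof. move=> ?; rewrite /Dn; case: ifP => ? ?; lia. Qed.

Lemma pw7 n l i : 17 <= n -> 7 <= l -> l < Dn n -> i < n ->
  ~ (Bf n i <= H false true n (if i <= 3*l-7 then 3*l-7-i else 3*l-7+n-i) <= Cf n i
     /\ Bf n i < Cf n i).
Proof.
move=> ? ? + ?; rewrite /Dn; case: ifP => ?; case: ifP => ? ?; rewrite /Bf /Cf /H /F; slia.
Qed.

Lemma st7 n l : 17 <= n -> 7 <= l -> l < Dn n ->
  Cf n (3 * ((l-1) %/ 2)) <= H false true n (3*l-7 - 3 * ((l-1) %/ 2)) <= Bf n (3 * ((l-1) %/ 2))
  /\ Cf n (3 * ((l-1) %/ 2)) < Bf n (3 * ((l-1) %/ 2)).
Proof.
move=> ? ? +; rewrite /Dn; case: ifP => ? ?; rewrite /Bf /Cf /H /F; slia.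
Qed.

Lemma fam7 n l : 17 <= n -> 7 <= l -> l < Dn n -> ~ l_distance_balanced (GP n 3) l.
Proof.
move=> h1 h2 h3; have hb := Dn_bound (ltnW h1) h3.
have -> : l = H false true n (3*l-7) by move: h3; rewrite /Dn; case: ifP => ? ?; rewrite /H /F; slia.
apply: (@fam _ _ [:: 3 * ((l-1) %/ 2)]) => //; try lia.
- by rewrite /=; lia.
- move=> i hi _; rewrite Aif //; [exact: pw7 | lia].
- rewrite !big_seq1; apply: ptw_lt; rewrite Aif; try lia.
  have -> : (3 * ((l - 1) %/ 2) <= 3 * l - 7) = true by lia.
  exact: st7.
Qed.


Lemma pwL1 n i : 26 <= n -> i < n -> i \notin [:: 1; 2; 3; 6; 9; 12; (n - 1 - 2); (n - 1 - 1); (n - 1 - 0)] ->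
  ~ (Bf n i <= H false true n (if i <= 0 then 0 - i else 0 + n - i) <= Cf n i /\ Bf n i < Cf n i).
Proof.
move=> hn hi hS.
case: (ltnP i 13) => h1.
  case: i hi hS h1 => [|[|[|[|[|[|[|[|[|[|[|[|[|i]]]]]]]]]]]]] hi hS h1;
   try (by move: hS; rewrite !inE eqxx ?orbT);
   try (by exfalso; lia);
   clear hS; rewrite /=; rewrite /Bf /Cf /H /F; slia.
case: (ltnP i (n - 3)) => h2.
  clear hS; case: ifP => ?; rewrite /Bf /Cf /H /F; slia.
have [j [hj ei]] : exists j, j < 3 /\ i = n - 1 - j by exists (n - 1 - i); split; lia.
subst i.
clear h1 h2 hi.
case: j hj hS => [|[|[|j]]] hj hS; try (by exfalso; lia);
  try (by move: hS; rewrite !inE eqxx ?orbT);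
  clear hS; case: ifP => ?; rewrite /Bf /Cf /H /F; slia.
Qed.

Lemma famL1 n : 26 <= n -> ~ l_distance_balanced (GP n 3) 1.
Proof.
move=> hn.
have e : H false true n 0 = 1 by rewrite /H /F; slia.
suff : ~ l_distance_balanced (GP n 3) (H false true n 0) by rewrite e.
apply: (@fam n 0 [:: 1; 2; 3; 6; 9; 12; (n - 1 - 2); (n - 1 - 1); (n - 1 - 0)]).
- lia.
- lia.
- by rewrite /= ?inE; try lia.
- by rewrite /=; lia.
- move=> i hi hS; rewrite Aif //; [exact: pwL1 hn hi hS | lia].
- have v0 : Lf n 0 1 = 2 /\ Rf n 0 1 = 0.
    apply: (@LRval n 0 1 2 1 3); [lia | lia | rewrite /=; try (case: ifP => ?); rewrite /H /F; slia | rewrite /Bf /H /F; slia | rewrite /Cf /H /F; slia].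
  have v1 : Lf n 0 2 = 2 /\ Rf n 0 2 = 0.
    apply: (@LRval n 0 2 3 2 4); [lia | lia | rewrite /=; try (case: ifP => ?); rewrite /H /F; slia | rewrite /Bf /H /F; slia | rewrite /Cf /H /F; slia].
  have v2 : Lf n 0 3 = 0 /\ Rf n 0 3 = 2.
    apply: (@LRval n 0 3 2 3 1); [lia | lia | rewrite /=; try (case: ifP => ?); rewrite /H /F; slia | rewrite /Bf /H /F; slia | rewrite /Cf /H /F; slia].
  have v3 : Lf n 0 6 = 0 /\ Rf n 0 6 = 2.
    apply: (@LRval n 0 6 3 4 2); [lia | lia | rewrite /=; try (case: ifP => ?); rewrite /H /F; slia | rewrite /Bf /H /F; slia | rewrite /Cf /H /F; slia].
  have v4 : Lf n 0 9 = 0 /\ Rf n 0 9 = 2.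
    apply: (@LRval n 0 9 4 5 3); [lia | lia | rewrite /=; try (case: ifP => ?); rewrite /H /F; slia | rewrite /Bf /H /F; slia | rewrite /Cf /H /F; slia].
  have v5 : Lf n 0 12 = 0 /\ Rf n 0 12 = 2.
    apply: (@LRval n 0 12 5 6 4); [lia | lia | rewrite /=; try (case: ifP => ?); rewrite /H /F; slia | rewrite /Bf /H /F; slia | rewrite /Cf /H /F; slia].
  have v6 : Lf n 0 (n - 1 - 2) = 0 /\ Rf n 0 (n - 1 - 2) = 2.
    apply: (@LRval n 0 (n - 1 - 2) 2 3 1); [lia | lia | rewrite /=; try (case: ifP => ?); rewrite /H /F; slia | rewrite /Bf /H /F; slia | rewrite /Cf /H /F; slia].
  have v7 : Lf n 0 (n - 1 - 1) = 2 /\ Rf n 0 (n - 1 - 1) = 0.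
    apply: (@LRval n 0 (n - 1 - 1) 3 2 4); [lia | lia | rewrite /=; try (case: ifP => ?); rewrite /H /F; slia | rewrite /Bf /H /F; slia | rewrite /Cf /H /F; slia].
  have v8 : Lf n 0 (n - 1 - 0) = 2 /\ Rf n 0 (n - 1 - 0) = 0.
    apply: (@LRval n 0 (n - 1 - 0) 2 1 3); [lia | lia | rewrite /=; try (case: ifP => ?); rewrite /H /F; slia | rewrite /Bf /H /F; slia | rewrite /Cf /H /F; slia].
  rewrite !big_cons big_nil; case: v0 => -> ->; case: v1 => -> ->; case: v2 => -> ->; case: v3 => -> ->; case: v4 => -> ->; case: v5 => -> ->; case: v6 => -> ->; case: v7 => -> ->; case: v8 => -> ->; by [].
Qed.

Lemma pwL2 n i : 26 <= n -> i < n -> i \notin [:: 1; 2; 3; 6; 9; 12; (n - 1 - 2); (n - 1 - 1); (n - 1 - 0)] ->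
  ~ (Bf n i <= H false true n (if i <= 1 then 1 - i else 1 + n - i) <= Cf n i /\ Bf n i < Cf n i).
Proof.
move=> hn hi hS.
case: (ltnP i 13) => h1.
  case: i hi hS h1 => [|[|[|[|[|[|[|[|[|[|[|[|[|i]]]]]]]]]]]]] hi hS h1;
   try (by move: hS; rewrite !inE eqxx ?orbT);
   try (by exfalso; lia);
   clear hS; rewrite /=; rewrite /Bf /Cf /H /F; slia.
case: (ltnP i (n - 3)) => h2.
  clear hS; case: ifP => ?; rewrite /Bf /Cf /H /F; slia.
have [j [hj ei]] : exists j, j < 3 /\ i = n - 1 - j by exists (n - 1 - i); split; lia.
subst i.
clear h1 h2 hi.
case: j hj hS => [|[|[|j]]] hj hS; try (by exfalso; lia);
  try (by move: hS; rewrite !inE eqxx ?orbT);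
  clear hS; case: ifP => ?; rewrite /Bf /Cf /H /F; slia.
Qed.

Lemma famL2 n : 26 <= n -> ~ l_distance_balanced (GP n 3) 2.
Proof.
move=> hn.
have e : H false true n 1 = 2 by rewrite /H /F; slia.
suff : ~ l_distance_balanced (GP n 3) (H false true n 1) by rewrite e.
apply: (@fam n 1 [:: 1; 2; 3; 6; 9; 12; (n - 1 - 2); (n - 1 - 1); (n - 1 - 0)]).
- lia.
- lia.
- by rewrite /= ?inE; try lia.
- by rewrite /=; lia.
- move=> i hi hS; rewrite Aif //; [exact: pwL2 hn hi hS | lia].
- have v0 : Lf n 1 1 = 1 /\ Rf n 1 1 = 0.
    apply: (@LRval n 1 1 1 1 3); [lia | lia | rewrite /=; try (case: ifP => ?); rewrite /H /F; slia | rewrite /Bf /H /F; slia | rewrite /Cf /H /F; slia].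
  have v1 : Lf n 1 2 = 1 /\ Rf n 1 2 = 0.
    apply: (@LRval n 1 2 2 2 4); [lia | lia | rewrite /=; try (case: ifP => ?); rewrite /H /F; slia | rewrite /Bf /H /F; slia | rewrite /Cf /H /F; slia].
  have v2 : Lf n 1 3 = 0 /\ Rf n 1 3 = 1.
    apply: (@LRval n 1 3 3 3 1); [lia | lia | rewrite /=; try (case: ifP => ?); rewrite /H /F; slia | rewrite /Bf /H /F; slia | rewrite /Cf /H /F; slia].
  have v3 : Lf n 1 6 = 0 /\ Rf n 1 6 = 1.
    apply: (@LRval n 1 6 4 4 2); [lia | lia | rewrite /=; try (case: ifP => ?); rewrite /H /F; slia | rewrite /Bf /H /F; slia | rewrite /Cf /H /F; slia].
  have v4 : Lf n 1 9 = 0 /\ Rf n 1 9 = 1.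
    apply: (@LRval n 1 9 5 5 3); [lia | lia | rewrite /=; try (case: ifP => ?); rewrite /H /F; slia | rewrite /Bf /H /F; slia | rewrite /Cf /H /F; slia].
  have v5 : Lf n 1 12 = 0 /\ Rf n 1 12 = 1.
    apply: (@LRval n 1 12 6 6 4); [lia | lia | rewrite /=; try (case: ifP => ?); rewrite /H /F; slia | rewrite /Bf /H /F; slia | rewrite /Cf /H /F; slia].
  have v6 : Lf n 1 (n - 1 - 2) = 0 /\ Rf n 1 (n - 1 - 2) = 1.
    apply: (@LRval n 1 (n - 1 - 2) 3 3 1); [lia | lia | rewrite /=; try (case: ifP => ?); rewrite /H /F; slia | rewrite /Bf /H /F; slia | rewrite /Cf /H /F; slia].
  have v7 : Lf n 1 (n - 1 - 1) = 1 /\ Rf n 1 (n - 1 - 1) = 0.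
    apply: (@LRval n 1 (n - 1 - 1) 2 2 4); [lia | lia | rewrite /=; try (case: ifP => ?); rewrite /H /F; slia | rewrite /Bf /H /F; slia | rewrite /Cf /H /F; slia].
  have v8 : Lf n 1 (n - 1 - 0) = 1 /\ Rf n 1 (n - 1 - 0) = 0.
    apply: (@LRval n 1 (n - 1 - 0) 3 1 3); [lia | lia | rewrite /=; try (case: ifP => ?); rewrite /H /F; slia | rewrite /Bf /H /F; slia | rewrite /Cf /H /F; slia].
  rewrite !big_cons big_nil; case: v0 => -> ->; case: v1 => -> ->; case: v2 => -> ->; case: v3 => -> ->; case: v4 => -> ->; case: v5 => -> ->; case: v6 => -> ->; case: v7 => -> ->; case: v8 => -> ->; by [].
Qed.

Lemma pwL3 n i : 26 <= n -> i < n -> i \notin [:: 1; 2; 3; 6; 9; 12; (n - 1 - 1)] ->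
  ~ (Bf n i <= H false true n (if i <= 4 then 4 - i else 4 + n - i) <= Cf n i /\ Bf n i < Cf n i).
Proof.
move=> hn hi hS.
case: (ltnP i 13) => h1.
  case: i hi hS h1 => [|[|[|[|[|[|[|[|[|[|[|[|[|i]]]]]]]]]]]]] hi hS h1;
   try (by move: hS; rewrite !inE eqxx ?orbT);
   try (by exfalso; lia);
   clear hS; rewrite /=; rewrite /Bf /Cf /H /F; slia.
case: (ltnP i (n - 3)) => h2.
  clear hS; case: ifP => ?; rewrite /Bf /Cf /H /F; slia.
have [j [hj ei]] : exists j, j < 3 /\ i = n - 1 - j by exists (n - 1 - i); split; lia.
subst i.
clear h1 h2 hi.
case: j hj hS => [|[|[|j]]] hj hS; try (by exfalso; lia);
  try (by move: hS; rewrite !inE eqxx ?orbT);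
  clear hS; case: ifP => ?; rewrite /Bf /Cf /H /F; slia.
Qed.

Lemma famL3 n : 26 <= n -> ~ l_distance_balanced (GP n 3) 3.
Proof.
move=> hn.
have e : H false true n 4 = 3 by rewrite /H /F; slia.
suff : ~ l_distance_balanced (GP n 3) (H false true n 4) by rewrite e.
apply: (@fam n 4 [:: 1; 2; 3; 6; 9; 12; (n - 1 - 1)]).
- lia.
- lia.
- by rewrite /= ?inE; try lia.
- by rewrite /=; lia.
- move=> i hi hS; rewrite Aif //; [exact: pwL3 hn hi hS | lia].
- have v0 : Lf n 4 1 = 2 /\ Rf n 4 1 = 0.
    apply: (@LRval n 4 1 2 1 3); [lia | lia | rewrite /=; try (case: ifP => ?); rewrite /H /F; slia | rewrite /Bf /H /F; slia | rewrite /Cf /H /F; slia].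
  have v1 : Lf n 4 2 = 2 /\ Rf n 4 2 = 0.
    apply: (@LRval n 4 2 3 2 4); [lia | lia | rewrite /=; try (case: ifP => ?); rewrite /H /F; slia | rewrite /Bf /H /F; slia | rewrite /Cf /H /F; slia].
  have v2 : Lf n 4 3 = 0 /\ Rf n 4 3 = 2.
    apply: (@LRval n 4 3 2 3 1); [lia | lia | rewrite /=; try (case: ifP => ?); rewrite /H /F; slia | rewrite /Bf /H /F; slia | rewrite /Cf /H /F; slia].
  have v3 : Lf n 4 6 = 0 /\ Rf n 4 6 = 2.
    apply: (@LRval n 4 6 3 4 2); [lia | lia | rewrite /=; try (case: ifP => ?); rewrite /H /F; slia | rewrite /Bf /H /F; slia | rewrite /Cf /H /F; slia].
  have v4 : Lf n 4 9 = 0 /\ Rf n 4 9 = 2.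
    apply: (@LRval n 4 9 4 5 3); [lia | lia | rewrite /=; try (case: ifP => ?); rewrite /H /F; slia | rewrite /Bf /H /F; slia | rewrite /Cf /H /F; slia].
  have v5 : Lf n 4 12 = 0 /\ Rf n 4 12 = 2.
    apply: (@LRval n 4 12 5 6 4); [lia | lia | rewrite /=; try (case: ifP => ?); rewrite /H /F; slia | rewrite /Bf /H /F; slia | rewrite /Cf /H /F; slia].
  have v6 : Lf n 4 (n - 1 - 1) = 2 /\ Rf n 4 (n - 1 - 1) = 0.
    apply: (@LRval n 4 (n - 1 - 1) 3 2 4); [lia | lia | rewrite /=; try (case: ifP => ?); rewrite /H /F; slia | rewrite /Bf /H /F; slia | rewrite /Cf /H /F; slia].
  rewrite !big_cons big_nil; case: v0 => -> ->; case: v1 => -> ->; case: v2 => -> ->; case: v3 => -> ->; case: v4 => -> ->; case: v5 => -> ->; case: v6 => -> ->; by [].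
Qed.

Lemma pwL4 n i : 26 <= n -> i < n -> i \notin [:: 2; 3; 6] ->
  ~ (Bf n i <= H false true n (if i <= 9 then 9 - i else 9 + n - i) <= Cf n i /\ Bf n i < Cf n i).
Proof.
move=> hn hi hS.
case: (ltnP i 13) => h1.
  case: i hi hS h1 => [|[|[|[|[|[|[|[|[|[|[|[|[|i]]]]]]]]]]]]] hi hS h1;
   try (by move: hS; rewrite !inE eqxx ?orbT);
   try (by exfalso; lia);
   clear hS; rewrite /=; rewrite /Bf /Cf /H /F; slia.
case: (ltnP i (n - 3)) => h2.
  clear hS; case: ifP => ?; rewrite /Bf /Cf /H /F; slia.
have [j [hj ei]] : exists j, j < 3 /\ i = n - 1 - j by exists (n - 1 - i); split; lia.
subst i.
clear h1 h2 hi.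
case: j hj hS => [|[|[|j]]] hj hS; try (by exfalso; lia);
  try (by move: hS; rewrite !inE eqxx ?orbT);
  clear hS; case: ifP => ?; rewrite /Bf /Cf /H /F; slia.
Qed.

Lemma famL4 n : 26 <= n -> ~ l_distance_balanced (GP n 3) 4.
Proof.
move=> hn.
have e : H false true n 9 = 4 by rewrite /H /F; slia.
suff : ~ l_distance_balanced (GP n 3) (H false true n 9) by rewrite e.
apply: (@fam n 9 [:: 2; 3; 6]).
- lia.
- lia.
- by rewrite /= ?inE; try lia.
- by rewrite /=; lia.
- move=> i hi hS; rewrite Aif //; [exact: pwL4 hn hi hS | lia].
- have v0 : Lf n 9 2 = 1 /\ Rf n 9 2 = 0.
    apply: (@LRval n 9 2 4 2 4); [lia | lia | rewrite /=; try (case: ifP => ?); rewrite /H /F; slia | rewrite /Bf /H /F; slia | rewrite /Cf /H /F; slia].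
  have v1 : Lf n 9 3 = 0 /\ Rf n 9 3 = 1.
    apply: (@LRval n 9 3 3 3 1); [lia | lia | rewrite /=; try (case: ifP => ?); rewrite /H /F; slia | rewrite /Bf /H /F; slia | rewrite /Cf /H /F; slia].
  have v2 : Lf n 9 6 = 0 /\ Rf n 9 6 = 1.
    apply: (@LRval n 9 6 2 4 2); [lia | lia | rewrite /=; try (case: ifP => ?); rewrite /H /F; slia | rewrite /Bf /H /F; slia | rewrite /Cf /H /F; slia].
  rewrite !big_cons big_nil; case: v0 => -> ->; case: v1 => -> ->; case: v2 => -> ->; by [].
Qed.

Lemma pwL5 n i : 26 <= n -> i < n -> i \notin [:: 6] ->
  ~ (Bf n i <= H false true n (if i <= 10 then 10 - i else 10 + n - i) <= Cf n i /\ Bf n i < Cf n i).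
Proof.
move=> hn hi hS.
case: (ltnP i 13) => h1.
  case: i hi hS h1 => [|[|[|[|[|[|[|[|[|[|[|[|[|i]]]]]]]]]]]]] hi hS h1;
   try (by move: hS; rewrite !inE eqxx ?orbT);
   try (by exfalso; lia);
   clear hS; rewrite /=; rewrite /Bf /Cf /H /F; slia.
case: (ltnP i (n - 3)) => h2.
  clear hS; case: ifP => ?; rewrite /Bf /Cf /H /F; slia.
have [j [hj ei]] : exists j, j < 3 /\ i = n - 1 - j by exists (n - 1 - i); split; lia.
subst i.
clear h1 h2 hi.
case: j hj hS => [|[|[|j]]] hj hS; try (by exfalso; lia);
  try (by move: hS; rewrite !inE eqxx ?orbT);
  clear hS; case: ifP => ?; rewrite /Bf /Cf /H /F; slia.
Qed.

Lemma famL5 n : 26 <= n -> ~ l_distance_balanced (GP n 3) 5.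
Proof.
move=> hn.
have e : H false true n 10 = 5 by rewrite /H /F; slia.
suff : ~ l_distance_balanced (GP n 3) (H false true n 10) by rewrite e.
apply: (@fam n 10 [:: 6]).
- lia.
- lia.
- by rewrite /= ?inE; try lia.
- by rewrite /=; lia.
- move=> i hi hS; rewrite Aif //; [exact: pwL5 hn hi hS | lia].
- have v0 : Lf n 10 6 = 0 /\ Rf n 10 6 = 2.
    apply: (@LRval n 10 6 3 4 2); [lia | lia | rewrite /=; try (case: ifP => ?); rewrite /H /F; slia | rewrite /Bf /H /F; slia | rewrite /Cf /H /F; slia].
  rewrite !big_cons big_nil; case: v0 => -> ->; by [].
Qed.

Lemma pwL6 n i : 26 <= n -> i < n -> i \notin [:: 6] ->
  ~ (Bf n i <= H false true n (if i <= 13 then 13 - i else 13 + n - i) <= Cf n i /\ Bf n i < Cf n i).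
Proof.
move=> hn hi hS.
case: (ltnP i 13) => h1.
  case: i hi hS h1 => [|[|[|[|[|[|[|[|[|[|[|[|[|i]]]]]]]]]]]]] hi hS h1;
   try (by move: hS; rewrite !inE eqxx ?orbT);
   try (by exfalso; lia);
   clear hS; rewrite /=; rewrite /Bf /Cf /H /F; slia.
case: (ltnP i (n - 3)) => h2.
  clear hS; case: ifP => ?; rewrite /Bf /Cf /H /F; slia.
have [j [hj ei]] : exists j, j < 3 /\ i = n - 1 - j by exists (n - 1 - i); split; lia.
subst i.
clear h1 h2 hi.
case: j hj hS => [|[|[|j]]] hj hS; try (by exfalso; lia);
  try (by move: hS; rewrite !inE eqxx ?orbT);
  clear hS; case: ifP => ?; rewrite /Bf /Cf /H /F; slia.
Qed.

Lemma famL6 n : 26 <= n -> ~ l_distance_balanced (GP n 3) 6.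
Proof.
move=> hn.
have e : H false true n 13 = 6 by rewrite /H /F; slia.
suff : ~ l_distance_balanced (GP n 3) (H false true n 13) by rewrite e.
apply: (@fam n 13 [:: 6]).
- lia.
- lia.
- by rewrite /= ?inE; try lia.
- by rewrite /=; lia.
- move=> i hi hS; rewrite Aif //; [exact: pwL6 hn hi hS | lia].
- have v0 : Lf n 13 6 = 0 /\ Rf n 13 6 = 1.
    apply: (@LRval n 13 6 4 4 2); [lia | lia | rewrite /=; try (case: ifP => ?); rewrite /H /F; slia | rewrite /Bf /H /F; slia | rewrite /Cf /H /F; slia].
  rewrite !big_cons big_nil; case: v0 => -> ->; by [].
Qed.

Lemma card_GP n (P : bool -> nat -> bool) :
  #|[set w : GPvert n | P w.1 w.2]| = \sum_(0 <= i < n) (P false i + P true i).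
Proof.
rewrite -sum1dep_card big_mkcond /=.
transitivity (\sum_(b : bool) \sum_(i : 'I_n) (if P b i then 1 else 0)).
  by rewrite pair_bigA; apply: eq_bigr => [[b i]].
rewrite big_bool /= addnC -big_split /= big_mkord.
by apply: eq_bigr => i _; case: (P false i); case: (P true i).
Qed.

Definition distN n (a : bool) (i : nat) (b : bool) (j : nat) := H a b n (off n i j).
Definition cnt n a i b j :=
  sumn (map (fun k => (distN n false k a i < distN n false k b j) +
                      (distN n true k a i < distN n true k b j)) (iota 0 n)).

Lemma cardW n (x y : GPvert n) : 16 <= n ->
  #|Wset (GP n 3) x y| = cnt n x.1 x.2 y.1 y.2.
Proof.
move=> hn.
have -> : Wset (GP n 3) x y =
   [set w : GPvert n | (fun b k => distN n b k x.1 x.2 < distN n b k y.1 y.2) w.1 w.2].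
  by apply/setP => w; rewrite !inE !gdist_GP.
by rewrite (card_GP n (fun b k => distN n b k x.1 x.2 < distN n b k y.1 y.2)) sum_nat_sumn.
Qed.

Definition chk16 :=
  all (fun a => all (fun i => all (fun b => all (fun j =>
     (distN 16 a i b j == 5) ==> (cnt 16 a i b j == cnt 16 b j a i))
     (iota 0 16)) [:: false; true]) (iota 0 16)) [:: false; true].

Lemma chk16_ok : chk16. Proof. by vm_compute. Qed.

Lemma bal16 : l_distance_balanced (GP 16 3) 5.
Proof.
rewrite /l_distance_balanced => -[a i] [b j]; rewrite gdist_GP // => e; rewrite !cardW //=.
have e' : distN 16 a i b j = 5 := e.
have hi : (i : nat) \in iota 0 16 by rewrite mem_iota leq0n add0n ltn_ord.
have hj : (j : nat) \in iota 0 16 by rewrite mem_iota leq0n add0n ltn_ord.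
have ha : a \in [:: false; true] by rewrite !inE; case: (a).
have hb : b \in [:: false; true] by rewrite !inE; case: (b).
have := chk16_ok.
move=> /allP /(_ a ha) /allP /(_ i hi) /allP /(_ b hb) /allP /(_ j hj).
by rewrite e' eqxx /= => /eqP.
Qed.

Lemma diam16 : 5 < diam (GP 16 3).
Proof.
pose x0 : GPvert 16 := (false, Ordinal (isT : 0 < 16)).
pose y8 : GPvert 16 := (false, Ordinal (isT : 8 < 16)).
have h0 : gdist (GP 16 3) x0 y8 = 6 by rewrite gdist_GP.
have h1 : gdist (GP 16 3) x0 y8 <= \max_y gdist (GP 16 3) x0 y :=
  leq_bigmax (F := fun y => gdist (GP 16 3) x0 y) y8.
have h2 : \max_y gdist (GP 16 3) x0 y <= diam (GP 16 3) :=
  leq_bigmax (F := fun x => \max_y gdist (GP 16 3) x y) x0.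
rewrite h0 in h1; exact: leq_trans h1 h2.
Qed.

Theorem theorem1p3 :
  (forall n : nat, 16 < n ->
     forall l : nat, 1 <= l < diam (GP n 3) ->
       ~ l_distance_balanced (GP n 3) l)
  /\
  (forall N : nat, N < 16 ->
     ~ (forall n : nat, N < n ->
          forall l : nat, 1 <= l < diam (GP n 3) ->
            ~ l_distance_balanced (GP n 3) l)).
Proof.
split.
  move=> n hn l /andP [l1 hl].
  have hD : l < Dn n by apply: leq_trans hl (diam_le _); lia.
  case: (leqP n 25) => hn2.
    apply: small17_25; lia.
  case: (leqP 7 l) => hl7; first by apply: fam7 => //.
  have h26 : 26 <= n by [].
  case: l l1 hl hD hl7 => [|[|[|[|[|[|[|l]]]]]]] // l1 hl hD hl7.
  - exact: famL1.
  - exact: famL2.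
  - exact: famL3.
  - exact: famL4.
  - exact: famL5.
  - exact: famL6.
move=> N hN H0.
apply: (H0 16 hN 5 _ bal16).
by rewrite diam16.
Qed.
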